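(* For every positive integer $n$ there exists a functor $\mathbf{GL}_n$ from the category of partial rings to the category of partial groups which is representable (there is a partial ring $G$ such that, for every partial ring $A$, the underlying set of $\mathbf{GL}_n(A)$ is in bijection with $\mathrm{Hom}_{\mathrm{pring}}(G,A)$, naturally in $A$), and which has the following properties: (1) if $A$ is a good partial ring, then $\mathbf{GL}_n(A)$ is a group, i.e. the restriction of $\mathbf{GL}_n$ to good partial rings factors through the category of groups; (2) if $A$ is a commutative ring with $1$, then $\mathbf{GL}_n(A)$ is the general linear group of invertible $n\times n$ matrices with entries in $A$; (3) $\mathbf{GL}_n(\mathbb{F}_1)$ is the $n$-th symmetric group $\mathfrak{S}_n$.
   Context: A partial magma is a set $A$ with a distinguished element $0$, a subset $A_2\subseteq A\times A$ of ''summable pairs'' and a map $+\colon A_2\to A$, such that $(0,a),(a,0)\in A_2$ and $a+0=0+a=a$ for all $a$, and $(a,b)\in A_2$ implies $(b,a)\in A_2$ and $a+b=b+a$. It is a partial monoid if moreover, for all $a,b,c$: $(a,b)\in A_2$ and $(a+b,c)\in A_2$ hold if and only if $(b,c)\in A_2$ and $(a,b+c)\in A_2$ hold, and then $(a+b)+c=a+(b+c)$. A partial ring is a partial monoid $A$ with a commutative, associative multiplication with unit $1$ such that $0\cdot a=0$ for all $a$, and $(a_1,a_2)\in A_2$ implies $(a_1x,a_2x)\in A_2$ and $(a_1+a_2)x=a_1x+a_2x$ for all $x$. A homomorphism of partial rings is a map $f$ with $f(0)=0$, $f(1)=1$, $f(ab)=f(a)f(b)$, and $(a_1,a_2)\in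 A_2\Rightarrow (f(a_1),f(a_2))\in B_2$ and $f(a_1+a_2)=f(a_1)+f(a_2)$. A commutative ring with $1$ is regarded as a partial ring in which all pairs are summable. $\mathbb{F}_1$ denotes the partial ring $\{0,1\}$ with the usual multiplication in which $1+1$ is undefined. For a partial monoid $A$, an $r$-tuple $(a_1,\dots,a_r)$ is summable, written $(a_1,\dots,a_r)\in A_r$, if the sum $a_1+\dots+a_r$ can be calculated in $A$. Put $A_{(n)}=\{(c_1,\dots,c_n)\in A^n : (a_1c_1,\dots,a_nc_n)\in A_n \text{ for all } a_1,\dots,a_n\in A\}$. A partial ring $A$ is good if $A_n=A_{(n)}$. A partial group is a set $G$ with a unit element $1$, a subset $G_2\subseteq G\times G$ and a (not necessarily commutative or associative) product $G_2\to G$, such that $(1,a),(a,1)\in G_2$ with $1a=a1=a$ for all $a$, and for every $a\in G$ there is $b\in G$ with $(a,b),(b,a)\in G_2$ and $ab=ba=1$. A morphism of partial groups is a map preserving $1$, sending $G_2$ into $H_2$ and preserving products. *)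

(* Defs.v *)
From mathcomp Require Import all_boot all_order all_algebra all_fingroup.
Set Implicit Arguments. Unset Strict Implicit. Unset Printing Implicit Defensive.
Import GRing.Theory.

(* Partial rings.  The partial addition  + : A_2 -> A  is encoded as a *)
(* function  pr_add : A -> A -> option A  with                          *)
(*   (a,b) \in A_2  <->  pr_add a b <> None,   and then a+b = the value.*)
Record PRing := PRingPack {
  pr_car :> Type;
  pr_zero : pr_car;
  pr_one : pr_car;
  pr_add : pr_car -> pr_car -> option pr_car;
  pr_mul : pr_car -> pr_car -> pr_car;
  pr_add0a : forall a, pr_add pr_zero a = Some a;
  pr_adda0 : forall a, pr_add a pr_zero = Some a;
  pr_addC : forall a b, pr_add a b = pr_add b a;
  (* partial monoid: ((a,b) in A_2 /\ (a+b,c) in A_2) <-> ((b,c) in A_2 /\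
     (a,b+c) in A_2), and then (a+b)+c = a+(b+c) *)
  pr_addA : forall a b c,
    obind (fun ab => pr_add ab c) (pr_add a b)
    = obind (fun bc => pr_add a bc) (pr_add b c);
  pr_mulC : forall a b, pr_mul a b = pr_mul b a;
  pr_mulA : forall a b c, pr_mul a (pr_mul b c) = pr_mul (pr_mul a b) c;
  pr_mul1a : forall a, pr_mul pr_one a = a;
  pr_mul0a : forall a, pr_mul pr_zero a = pr_zero;
  pr_mulDl : forall a1 a2 s x, pr_add a1 a2 = Some s ->
    pr_add (pr_mul a1 x) (pr_mul a2 x) = Some (pr_mul s x)
}.

Record phom (A B : PRing) := PHom {
  phom_fun :> A -> B;
  phom0 : phom_fun (pr_zero A) = pr_zero B;
  phom1 : phom_fun (pr_one A) = pr_one B;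
  phomM : forall a b, phom_fun (pr_mul a b) = pr_mul (phom_fun a) (phom_fun b);
  phomD : forall a1 a2 s, pr_add a1 a2 = Some s ->
    pr_add (phom_fun a1) (phom_fun a2) = Some (phom_fun s)
}.

Definition phom_id (A : PRing) : phom A A.
Proof. by apply: (@PHom A A id). Defined.

Definition phom_comp (A B C : PRing) (g : phom B C) (f : phom A B) : phom A C.
Proof.
apply: (@PHom A C (fun x => g (f x))).
- by rewrite !phom0.
- by rewrite !phom1.
- by move=> a b; rewrite !phomM.
- by move=> a1 a2 s h; do 2 apply: phomD.
Defined.

(* Summability of finite tuples:  (a_1,...,a_r) \in A_r  iff the sum
   a_1 + (a_2 + (... + (a_r + 0))) can be computed. *)
Fixpoint psum (A : PRing) (s : seq A) : option A :=
  match s with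
  | [::] => Some (pr_zero A)
  | a :: s' => obind (pr_add a) (psum s')
  end.

Definition psummable (A : PRing) (s : seq A) : Prop := exists v, psum s = Some v.

Definition in_Aparen (A : PRing) (c : seq A) : Prop :=
  forall a : seq A, size a = size c ->
    psummable [seq pr_mul p.1 p.2 | p <- zip a c].

Definition good (A : PRing) : Prop :=
  forall c : seq A, psummable c <-> in_Aparen c.

(* Partial groups, same option encoding of the partial product.        *)
Record PGroup := PGroupPack {
  pg_car :> Type;
  pg_one : pg_car;
  pg_mul : pg_car -> pg_car -> option pg_car;
  pg_mul1a : forall a, pg_mul pg_one a = Some a;
  pg_mula1 : forall a, pg_mul a pg_one = Some a;
  pg_inv : forall a, exists b, pg_mul a b = Some pg_one /\ pg_mul b a = Some pg_one
}.

Record pgmor (G H : PGroup) := PGMor {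
  pgmor_fun :> G -> H;
  pgmor1 : pgmor_fun (pg_one G) = pg_one H;
  pgmorM : forall a b c, pg_mul a b = Some c ->
    pg_mul (pgmor_fun a) (pgmor_fun b) = Some (pgmor_fun c)
}.

Definition is_group (G : PGroup) : Prop :=
  (forall a b : G, exists c, pg_mul a b = Some c) /\
  (forall a b c : G,
     obind (fun ab => pg_mul ab c) (pg_mul a b)
     = obind (fun bc => pg_mul a bc) (pg_mul b c)).

Record PFunctor := PFunctorPack {
  F_obj :> PRing -> PGroup;
  F_map : forall A B : PRing, phom A B -> pgmor (F_obj A) (F_obj B);
  F_id : forall (A : PRing) (x : F_obj A), F_map (phom_id A) x = x;
  F_comp : forall (A B C : PRing) (g : phom B C) (f : phom A B) (x : F_obj A),
    F_map (phom_comp g f) x = F_map g (F_map f x)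
}.

Definition representable (F : PFunctor) : Prop :=
  exists (G : PRing) (eta : forall A : PRing, F A -> phom G A),
    (forall A : PRing, bijective (eta A)) /\
    (forall (A B : PRing) (f : phom A B) (x : F A) (g : G),
        eta B (@F_map F A B f x) g = f (eta A x g)).

Section ComRingPRing.
Variable R : comPzRingType.

Definition cr_add (a b : R) : option R := Some (a + b)%R.

Lemma cr_add0a (a : R) : cr_add 0%R a = Some a.
Proof. by rewrite /cr_add add0r. Qed.
Lemma cr_adda0 (a : R) : cr_add a 0%R = Some a.
Proof. by rewrite /cr_add addr0. Qed.
Lemma cr_addC (a b : R) : cr_add a b = cr_add b a.
Proof. by rewrite /cr_add addrC. Qed.
Lemma cr_addA (a b c : R) :
  obind (fun ab => cr_add ab c) (cr_add a b)
  = obind (fun bc => cr_add a bc) (cr_add b c).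
Proof. by rewrite /cr_add /= addrA. Qed.
Lemma cr_mulC (a b : R) : (a * b = b * a)%R.
Proof. exact: mulrC. Qed.
Lemma cr_mulA (a b c : R) : (a * (b * c) = a * b * c)%R.
Proof. exact: mulrA. Qed.
Lemma cr_mul1a (a : R) : (1 * a = a)%R.
Proof. exact: mul1r. Qed.
Lemma cr_mul0a (a : R) : (0 * a = 0)%R.
Proof. exact: mul0r. Qed.
Lemma cr_mulDl (a1 a2 s x : R) : cr_add a1 a2 = Some s ->
  cr_add (a1 * x)%R (a2 * x)%R = Some (s * x)%R.
Proof. by rewrite /cr_add => -[<-]; rewrite mulrDl. Qed.

Definition comring_pring : PRing :=
  @PRingPack R 0%R 1%R cr_add (fun a b => (a * b)%R)
    cr_add0a cr_adda0 cr_addC cr_addA cr_mulC cr_mulA cr_mul1a cr_mul0a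
    cr_mulDl.
End ComRingPRing.

Definition f1_add (a b : bool) : option bool :=
  if a && b then None else Some (a || b).

Lemma f1_add0a a : f1_add false a = Some a. Proof. by []. Qed.
Lemma f1_adda0 a : f1_add a false = Some a. Proof. by case: a. Qed.
Lemma f1_addC a b : f1_add a b = f1_add b a. Proof. by case: a; case: b. Qed.
Lemma f1_addA a b c :
  obind (fun ab => f1_add ab c) (f1_add a b)
  = obind (fun bc => f1_add a bc) (f1_add b c).
Proof. by case: a; case: b; case: c. Qed.
Lemma f1_mulC a b : a && b = b && a. Proof. exact: andbC. Qed.
Lemma f1_mulA a b c : a && (b && c) = (a && b) && c. Proof. exact: andbA. Qed.
Lemma f1_mul1a a : true && a = a. Proof. by []. Qed.
Lemma f1_mul0a a : false && a = false. Proof. by []. Qed.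
Lemma f1_mulDl a1 a2 s x : f1_add a1 a2 = Some s ->
  f1_add (a1 && x) (a2 && x) = Some (s && x).
Proof. by case: a1; case: a2; case: x => //= -[<-]. Qed.

Definition F1 : PRing :=
  @PRingPack bool false true f1_add andb
    f1_add0a f1_adda0 f1_addC f1_addA f1_mulC f1_mulA f1_mul1a f1_mul0a
    f1_mulDl.

Definition invertible_mx (R : comPzRingType) (n : nat) (M : 'M[R]_n) : Prop :=
  exists N : 'M[R]_n, (M *m N = 1%:M)%R /\ (N *m M = 1%:M)%R.

(* Main.v *)
Require Import Defs.
From mathcomp Require Import all_boot all_order all_algebra all_fingroup.
From HB Require Import structures.
From Stdlib Require Import Classical ClassicalEpsilon FunctionalExtensionality PropExtensionality ProofIrrelevance.
Set Implicit Arguments. Unset Strict Implicit. Unset Printing Implicit Defensive.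

Definition oadd (A : PRing) (x y : option A) : option A :=
  match x, y with Some a, Some b => pr_add a b | _, _ => None end.

Lemma oaddA (A : PRing) : associative (@oadd A).
Proof.
move=> [a|] [b|] [c|] //=; last by case: (pr_add a b).
have := pr_addA a b c.
by case: (pr_add a b) => [ab|]; case: (pr_add b c) => [bc|] //=.
Qed.
Lemma oaddC (A : PRing) : commutative (@oadd A).
Proof. by move=> [a|] [b|] //=; rewrite pr_addC. Qed.
Lemma oadd0 (A : PRing) : left_id (Some (pr_zero A)) (@oadd A).
Proof. by move=> [a|] //=; rewrite pr_add0a. Qed.

HB.instance Definition _ (A : PRing) :=
  Monoid.isComLaw.Build (option A) (Some (pr_zero A)) (@oadd A) (@oaddA A) (@oaddC A) (@oadd0 A).

Lemma psum_big (A : PRing) (s : seq A) :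
  psum s = \big[@oadd A/Some (pr_zero A)]_(x <- s) Some x.
Proof.
elim: s => [|a s IH]; first by rewrite big_nil.
by rewrite big_cons /= IH; case: (\big[_/_]_(x <- s) _).
Qed.

Lemma big_some (A : PRing) (I : finType) (F : I -> option A) v :
  \big[@oadd A/Some (pr_zero A)]_(k : I) F k = Some v -> forall k, F k <> None.
Proof. by move=> H k Fk; move: H; rewrite (bigD1 k) //= Fk. Qed.

Lemma phom_big (A B : PRing) (h : phom A B) (I : Type) (l : seq I) (f : I -> A) v :
  \big[@oadd A/Some (pr_zero A)]_(j <- l) Some (f j) = Some v ->
  \big[@oadd B/Some (pr_zero B)]_(j <- l) Some (h (f j)) = Some (h v).
Proof.
elim: l v => [|a l IH] v; first by rewrite !big_nil => -[<-]; rewrite phom0.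
rewrite !big_cons.
case E: (\big[_/_]_(j <- l) Some (f j)) => [w|] //= H.
by rewrite (IH _ E) /=; apply: phomD.
Qed.

Lemma big_mulr (A : PRing) (I : Type) (l : seq I) (f : I -> A) v x :
  \big[@oadd A/Some (pr_zero A)]_(j <- l) Some (f j) = Some v ->
  \big[@oadd A/Some (pr_zero A)]_(j <- l) Some (pr_mul (f j) x) = Some (pr_mul v x).
Proof.
elim: l v => [|a l IH] v; first by rewrite !big_nil => -[<-]; rewrite pr_mul0a.
rewrite !big_cons.
case E: (\big[_/_]_(j <- l) Some (f j)) => [w|] //= H.
by rewrite (IH _ E) /=; apply: pr_mulDl.
Qed.

Section GLn.
Variable n : nat.

Definition delta (A : PRing) (i k : 'I_n) : A := if i == k then pr_one A else pr_zero A.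
Definition osum (A : PRing) (f : 'I_n -> A) : option A :=
  \big[@oadd A/Some (pr_zero A)]_(j < n) Some (f j).
Definition mprod (A : PRing) (P Q : 'I_n -> 'I_n -> A) i k :=
  osum (fun j => pr_mul (P i j) (Q j k)).
Definition summ (A : PRing) (P : 'I_n -> 'I_n -> A) :=
  (forall i, osum (P i) <> None) /\ (forall j, osum (fun i => P i j) <> None).
Definition rel (A : PRing) (X Y : 'I_n -> 'I_n -> A) : Prop :=
  [/\ forall i k, mprod X Y i k = Some (delta A i k),
      forall i k, mprod Y X i k = Some (delta A i k), summ X & summ Y].

Lemma rel_sym (A : PRing) X Y : @rel A X Y -> rel Y X.
Proof. by case=> *; split. Qed.

Lemma osum_single (A : PRing) (f : 'I_n -> A) j0 :
  (forall j, j != j0 -> f j = pr_zero A) -> osum f = Some (f j0).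
Proof.
move=> H; rewrite /osum (bigD1 j0) //= big1 /= ?pr_adda0 //.
by move=> j /H ->.
Qed.

Lemma osum_mulr (A : PRing) (f : 'I_n -> A) v x :
  osum f = Some v -> osum (fun j => pr_mul (f j) x) = Some (pr_mul v x).
Proof. exact: big_mulr. Qed.

Lemma osum_mull (A : PRing) (f : 'I_n -> A) v x :
  osum f = Some v -> osum (fun j => pr_mul x (f j)) = Some (pr_mul x v).
Proof.
move=> /(osum_mulr x); rewrite pr_mulC => <-.
by apply: eq_bigr => j _; rewrite pr_mulC.
Qed.

Lemma osum_hom (A B : PRing) (h : phom A B) (f : 'I_n -> A) v :
  osum f = Some v -> osum (fun j => h (f j)) = Some (h v).
Proof. exact: phom_big. Qed.

Lemma fubini (A : PRing) (t : 'I_n -> 'I_n -> A) r v :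
  (forall j, osum (t j) = Some (r j)) -> osum r = Some v ->
  exists c, (forall k, osum (fun j => t j k) = Some (c k)) /\ osum c = Some v.
Proof.
move=> Ht Hr.
have E : \big[@oadd A/Some (pr_zero A)]_(k < n) osum (fun j => t j k) = Some v.
  rewrite /osum exchange_big /= -Hr; apply: eq_bigr => j _; exact: Ht.
have S := big_some E.
exists (fun k => odflt (pr_zero A) (osum (fun j => t j k))); split.
  by move=> k; case: (osum _) (S k).
rewrite -E; apply: eq_bigr => k _; by case: (osum _) (S k).
Qed.

Lemma mprod_hom (A B : PRing) (h : phom A B) P Q i k v :
  @mprod A P Q i k = Some v -> mprod (fun i j => h (P i j)) (fun i j => h (Q i j)) i k = Some (h v).
Proof.
move=> /(osum_hom h) <-; apply: eq_bigr => j _; by rewrite phomM.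
Qed.

Lemma delta_hom (A B : PRing) (h : phom A B) i k : h (delta A i k) = delta B i k.
Proof. by rewrite /delta; case: (i == k); rewrite ?phom0 ?phom1. Qed.

Lemma rel_hom (A B : PRing) (h : phom A B) X Y : @rel A X Y ->
  rel (fun i j => h (X i j)) (fun i j => h (Y i j)).
Proof.
case=> H1 H2 [S1 S2] [S3 S4]; split.
- by move=> i k; rewrite (mprod_hom h (H1 i k)) delta_hom.
- by move=> i k; rewrite (mprod_hom h (H2 i k)) delta_hom.
- split; [move=> i | move=> j].
    by case E: (osum (X i)) (S1 i) => [v|] // _; rewrite (osum_hom h E).
  by case E: (osum (fun i => X i j)) (S2 j) => [v|] // _; rewrite (osum_hom h E).
- split; [move=> i | move=> j].
    by case E: (osum (Y i)) (S3 i) => [v|] // _; rewrite (osum_hom h E).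
  by case E: (osum (fun i => Y i j)) (S4 j) => [v|] // _; rewrite (osum_hom h E).
Qed.


Lemma good_mul (A : PRing) (gA : good A) (c a : 'I_n -> A) :
  osum c <> None -> osum (fun j => pr_mul (a j) (c j)) <> None.
Proof.
move=> Hc.
have P : psummable [seq c j | j <- index_enum 'I_n].
  rewrite /psummable psum_big big_map; move: Hc; rewrite /osum.
  by case: (\big[_/_]_(j <- _) _) => [v|] // _; exists v.
have Hs : size [seq a j | j <- index_enum 'I_n] = size [seq c j | j <- index_enum 'I_n] by rewrite !size_map.
have [v Hv] := (proj1 (gA _) P) _ Hs.
move: Hv; rewrite zip_map -map_comp psum_big big_map /= => Hv.
by rewrite /osum Hv.
Qed.

Lemma mprod_def (A : PRing) (gA : good A) (P Q : 'I_n -> 'I_n -> A) i k :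
  osum (P i) <> None -> mprod P Q i k <> None.
Proof.
move=> /(good_mul gA (a:=fun j => Q j k)); rewrite /mprod.
suff -> : osum (fun j => pr_mul (Q j k) (P i j)) = osum (fun j => pr_mul (P i j) (Q j k)) by [].
by apply: eq_bigr => j _; rewrite pr_mulC.
Qed.

Lemma prod_rows (A : PRing) (gA : good A) (P Q U : 'I_n -> 'I_n -> A) :
  (forall i k, mprod P Q i k = Some (U i k)) ->
  (forall i, osum (P i) <> None) -> (forall i, osum (Q i) <> None) ->
  forall i, osum (U i) <> None.
Proof.
move=> HU HP HQ i.
pose rq j := odflt (pr_zero A) (osum (Q j)).
have Erq : forall j, osum (Q j) = Some (rq j) by move=> j; rewrite /rq; case: (osum _) (HQ j).
have := good_mul gA (a:=rq) (HP i).
case E: (osum _) => [v|] // _.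
have E' : osum (fun j => pr_mul (P i j) (rq j)) = Some v.
  by rewrite -E; apply: eq_bigr => j _; rewrite pr_mulC.
have [c [Hc1 Hc2]] := @fubini A (fun j k => pr_mul (P i j) (Q j k)) (fun j => pr_mul (P i j) (rq j)) v
   (fun j => osum_mull (P i j) (Erq j)) E'.
suff -> : osum (U i) = osum c by rewrite Hc2.
apply: eq_bigr => k _; have := HU i k; rewrite /mprod Hc1 => -[->] //.
Qed.

Lemma prod_cols (A : PRing) (gA : good A) (P Q U : 'I_n -> 'I_n -> A) :
  (forall i k, mprod P Q i k = Some (U i k)) ->
  (forall j, osum (fun i => P i j) <> None) -> (forall j, osum (fun i => Q i j) <> None) ->
  forall k, osum (fun i => U i k) <> None.
Proof.
move=> HU HP HQ k.
pose cp j := odflt (pr_zero A) (osum (fun i => P i j)).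
have Ecp : forall j, osum (fun i => P i j) = Some (cp j) by move=> j; rewrite /cp; case: (osum _) (HP j).
have := good_mul gA (a:=cp) (HQ k).
case E: (osum _) => [v|] // _.
have [c [Hc1 Hc2]] := @fubini A (fun j i => pr_mul (P i j) (Q j k)) (fun j => pr_mul (cp j) (Q j k)) v
   (fun j => osum_mulr (Q j k) (Ecp j)) E.
suff -> : osum (fun i => U i k) = osum c by rewrite Hc2.
apply: eq_bigr => i _; have := HU i k; rewrite /mprod Hc1 => -[->] //.
Qed.

Lemma prod_inv (A : PRing) (P Q R T U V : 'I_n -> 'I_n -> A) :
  (forall j l, mprod Q R j l = Some (delta A j l)) ->
  (forall i m, mprod P T i m = Some (delta A i m)) ->
  (forall i k, mprod P Q i k = Some (U i k)) ->
  (forall k m, mprod R T k m = Some (V k m)) ->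
  forall i m, mprod U V i m = Some (delta A i m).
Proof.
move=> HQR HPT HU HV i m.
have step1 : forall j, osum (fun k => pr_mul (pr_mul (P i j) (Q j k)) (V k m)) = Some (pr_mul (P i j) (T j m)).
  move=> j.
  pose t l k := pr_mul (pr_mul (P i j) (pr_mul (Q j k) (R k l))) (T l m).
  have H1 : forall l, osum (t l) = Some (pr_mul (pr_mul (P i j) (delta A j l)) (T l m)).
    by move=> l; apply: osum_mulr; apply: osum_mull; apply: HQR.
  have H2 : osum (fun l => pr_mul (pr_mul (P i j) (delta A j l)) (T l m)) = Some (pr_mul (P i j) (T j m)).
    rewrite (osum_single (j0 := j)) /delta ?eqxx.
      by rewrite [pr_mul (P i j) _]pr_mulC pr_mul1a.
    by move=> l /negbTE; rewrite eq_sym => ->; rewrite [pr_mul (P i j) _]pr_mulC !pr_mul0a.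
  have [c [Hc1 Hc2]] := fubini H1 H2.
  rewrite -Hc2; apply: eq_bigr => k _.
  have := osum_mull (pr_mul (P i j) (Q j k)) (HV k m); rewrite /mprod.
  move=> <-; rewrite -(Hc1 k); apply: eq_bigr => l _; rewrite /t.
  by rewrite !pr_mulA.
have [d [Hd1 Hd2]] := fubini step1 (HPT i m).
rewrite -Hd2; apply: eq_bigr => k _.
by rewrite -(osum_mulr (V k m) (HU i k)) -Hd1.
Qed.

Lemma prod_assoc (A : PRing) (P Q R U V : 'I_n -> 'I_n -> A) i l b :
  (forall i k, mprod P Q i k = Some (U i k)) ->
  (forall k m, mprod Q R k m = Some (V k m)) ->
  mprod P V i l = Some b -> mprod U R i l = Some b.
Proof.
move=> HU HV Hb.
have [c [Hc1 Hc2]] := @fubini A (fun j k => pr_mul (P i j) (pr_mul (Q j k) (R k l)))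
  (fun j => pr_mul (P i j) (V j l)) b (fun j => osum_mull (P i j) (HV j l)) Hb.
rewrite -Hc2; apply: eq_bigr => k _.
rewrite -Hc1 -(osum_mulr (R k l) (HU i k)).
by apply: eq_bigr => j _; rewrite pr_mulA.
Qed.


Inductive term := T0 | T1 | TX of 'I_n & 'I_n | TY of 'I_n & 'I_n
  | Tadd of term & term | Tmul of term & term.

Fixpoint ev (A : PRing) (X Y : 'I_n -> 'I_n -> A) (t : term) : option A :=
  match t with
  | T0 => Some (pr_zero A) | T1 => Some (pr_one A)
  | TX i j => Some (X i j) | TY i j => Some (Y i j)
  | Tadd t s => oadd (ev X Y t) (ev X Y s)
  | Tmul t s => match ev X Y t, ev X Y s with
                | Some a, Some b => Some (pr_mul a b) | _, _ => None end
  end.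

Definition Def t := forall A X Y, @rel A X Y -> ev X Y t <> None.
Definition Seq t s := forall A X Y, @rel A X Y -> ev X Y t = ev X Y s.

Lemma Def0 : Def T0. Proof. by []. Qed.
Lemma Def1 : Def T1. Proof. by []. Qed.

Lemma DefS t A X Y : Def t -> @rel A X Y -> exists a, ev X Y t = Some a.
Proof. by move=> D r; case E: (ev X Y t) (D A X Y r) => [a|] //; exists a. Qed.

Lemma Def_addl t s : Def (Tadd t s) -> Def t.
Proof. by move=> D A X Y r E; move: (D A X Y r) => /=; rewrite E. Qed.
Lemma Def_addr t s : Def (Tadd t s) -> Def s.
Proof. by move=> D A X Y r E; move: (D A X Y r) => /=; rewrite E; case: (ev X Y t). Qed.
Lemma Def_mul t s : Def t -> Def s -> Def (Tmul t s).
Proof.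
move=> Dt Ds A X Y r /=.
by have [a ->] := DefS Dt r; have [b ->] := DefS Ds r.
Qed.
Lemma Def_mull t s : Def (Tmul t s) -> Def t.
Proof. by move=> D A X Y r E; move: (D A X Y r) => /=; rewrite E. Qed.
Lemma Def_mulr t s : Def (Tmul t s) -> Def s.
Proof. by move=> D A X Y r E; move: (D A X Y r) => /=; rewrite E; case: (ev X Y t). Qed.

Lemma Seq_Def t s : Seq t s -> Def t -> Def s.
Proof. by move=> S D A X Y r; rewrite -(S A X Y r); apply: D. Qed.

Definition nt t := if excluded_middle_informative (Def t) then t else T0.
Lemma Def_nt t : Def (nt t).
Proof. by rewrite /nt; case: excluded_middle_informative. Qed.
Lemma nt_Def t : Def t -> nt t = t.
Proof. by rewrite /nt; case: excluded_middle_informative. Qed.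

Record Gc := MkGc { gp : term -> Prop ; gpP : exists t, Def t /\ gp = Seq t }.

Lemma Gc_eq (x y : Gc) : gp x = gp y -> x = y.
Proof.
case: x => px hx; case: y => py hy /= E; subst py.
by rewrite (proof_irrelevance _ hx hy).
Qed.

Definition cls t : Gc := @MkGc (Seq (nt t)) (ex_intro _ (nt t) (conj (@Def_nt t) erefl)).

Lemma Seq_refl t : Seq t t. Proof. by []. Qed.

Lemma cls_eq t s : Def t -> Def s -> (cls t = cls s <-> Seq t s).
Proof.
move=> Dt Ds; split.
  move=> /(f_equal gp) /=; rewrite !nt_Def // => E.
  by rewrite E; apply: Seq_refl.
move=> S; apply: Gc_eq => /=; rewrite !nt_Def //.
apply: functional_extensionality => r; apply: propositional_extensionality.
split=> H A X Y rl; [rewrite -(S A X Y rl) | rewrite (S A X Y rl)]; exact: H.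
Qed.

Lemma cls_surj (x : Gc) : exists t, Def t /\ x = cls t.
Proof.
case: x => p [t [Dt E]]; exists t; split => //.
by apply: Gc_eq => /=; rewrite nt_Def.
Qed.

Definition rep (x : Gc) : term := proj1_sig (constructive_indefinite_description _ (cls_surj x)).
Lemma repP x : Def (rep x) /\ x = cls (rep x).
Proof. exact: (proj2_sig (constructive_indefinite_description _ (cls_surj x))). Qed.

Lemma rep_cls t : Def t -> Seq (rep (cls t)) t.
Proof.
move=> Dt; have [D E] := repP (cls t).
by apply/(cls_eq D Dt).
Qed.

Definition sem t : option Gc := if excluded_middle_informative (Def t) then Some (cls t) else None.

Lemma sem_Seq t s : Seq t s -> sem t = sem s.
Proof.
move=> S; rewrite /sem.
case: excluded_middle_informative => Dt; case: excluded_middle_informative => Ds //.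
- by congr Some; apply/cls_eq.
- by case: Ds; apply: Seq_Def Dt.
- case: Dt; apply: Seq_Def Ds => A X Y r; by rewrite (S A X Y r).
Qed.

Lemma sem_Def t : Def t -> sem t = Some (cls t).
Proof. by rewrite /sem; case: excluded_middle_informative. Qed.
Lemma sem_nDef t : ~ Def t -> sem t = None.
Proof. by rewrite /sem; case: excluded_middle_informative. Qed.

Definition Gzero := cls T0.
Definition Gone := cls T1.
Definition Gmul x y := cls (Tmul (rep x) (rep y)).
Definition Gadd x y := sem (Tadd (rep x) (rep y)).

Lemma Seq_add t t' s s' : Seq t t' -> Seq s s' -> Seq (Tadd t s) (Tadd t' s').
Proof. by move=> S1 S2 A X Y r /=; rewrite (S1 A X Y r) (S2 A X Y r). Qed.
Lemma Seq_mul t t' s s' : Seq t t' -> Seq s s' -> Seq (Tmul t s) (Tmul t' s').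
Proof. by move=> S1 S2 A X Y r /=; rewrite (S1 A X Y r) (S2 A X Y r). Qed.

Lemma Gmul_cls t s : Def t -> Def s -> Gmul (cls t) (cls s) = cls (Tmul t s).
Proof.
move=> Dt Ds; have [D1 _] := repP (cls t); have [D2 _] := repP (cls s).
apply/cls_eq; try apply: Def_mul => //.
by apply: Seq_mul; apply: rep_cls.
Qed.

Lemma Gadd_cls t s : Def t -> Def s -> Gadd (cls t) (cls s) = sem (Tadd t s).
Proof. by move=> Dt Ds; apply: sem_Seq; apply: Seq_add; apply: rep_cls. Qed.

Ltac evs := repeat match goal with
  | D : Def ?t, r : rel ?X ?Y |- context [ev ?X ?Y ?t] =>
      let a := fresh "a" in let E := fresh "E" in
      have [a E] := DefS D r; rewrite E /=; clear E
  end.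

Lemma G_add0a x : Gadd Gzero x = Some x.
Proof.
have [t [Dt ->]] := cls_surj x; rewrite /Gzero Gadd_cls // -(sem_Def Dt).
by apply: sem_Seq => A X Y r /=; evs; rewrite pr_add0a.
Qed.
Lemma G_adda0 x : Gadd x Gzero = Some x.
Proof.
have [t [Dt ->]] := cls_surj x; rewrite /Gzero Gadd_cls // -(sem_Def Dt).
by apply: sem_Seq => A X Y r /=; evs; rewrite pr_adda0.
Qed.
Lemma G_addC x y : Gadd x y = Gadd y x.
Proof.
have [t [Dt ->]] := cls_surj x; have [s [Ds ->]] := cls_surj y; rewrite !Gadd_cls //.
by apply: sem_Seq => A X Y r /=; evs; rewrite pr_addC.
Qed.

Lemma obind_sem_l t c : Def c -> obind (fun u => Gadd u (cls c)) (sem t) = sem (Tadd t c).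
Proof.
move=> Dc; rewrite /sem; case: excluded_middle_informative => Dt /=.
  by rewrite Gadd_cls.
case: excluded_middle_informative => // D; case: Dt; exact: Def_addl D.
Qed.
Lemma obind_sem_r t a : Def a -> obind (fun u => Gadd (cls a) u) (sem t) = sem (Tadd a t).
Proof.
move=> Da; rewrite /sem; case: excluded_middle_informative => Dt /=.
  by rewrite Gadd_cls.
case: excluded_middle_informative => // D; case: Dt; exact: Def_addr D.
Qed.

Lemma G_addA x y z :
  obind (fun ab => Gadd ab z) (Gadd x y) = obind (fun bc => Gadd x bc) (Gadd y z).
Proof.
have [a [Da ->]] := cls_surj x; have [b [Db ->]] := cls_surj y; have [c [Dc ->]] := cls_surj z.
rewrite !Gadd_cls // obind_sem_l // obind_sem_r //.
apply: sem_Seq => A X Y r /=; evs.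
by have := oaddA (Some a0) (Some a1) (Some a2); rewrite /= => ->.
Qed.

Lemma G_mulC x y : Gmul x y = Gmul y x.
Proof.
have [a [Da ->]] := cls_surj x; have [b [Db ->]] := cls_surj y.
rewrite !Gmul_cls //; apply/cls_eq; try apply: Def_mul => //.
by move=> A X Y r /=; evs; rewrite pr_mulC.
Qed.
Lemma G_mulA x y z : Gmul x (Gmul y z) = Gmul (Gmul x y) z.
Proof.
have [a [Da ->]] := cls_surj x; have [b [Db ->]] := cls_surj y; have [c [Dc ->]] := cls_surj z.
rewrite !Gmul_cls //; try apply: Def_mul => //.
apply/cls_eq; repeat apply: Def_mul => //.
by move=> A X Y r /=; evs; rewrite pr_mulA.
Qed.
Lemma G_mul1a x : Gmul Gone x = x.
Proof.
have [a [Da ->]] := cls_surj x; rewrite /Gone Gmul_cls //; apply/cls_eq => //; first exact: Def_mul.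
by move=> A X Y r /=; evs; rewrite pr_mul1a.
Qed.
Lemma G_mul0a x : Gmul Gzero x = Gzero.
Proof.
have [a [Da ->]] := cls_surj x; rewrite /Gzero Gmul_cls //; apply/cls_eq => //; first exact: Def_mul.
by move=> A X Y r /=; evs; rewrite pr_mul0a.
Qed.
Lemma G_mulDl a1 a2 s x : Gadd a1 a2 = Some s -> Gadd (Gmul a1 x) (Gmul a2 x) = Some (Gmul s x).
Proof.
have [t1 [D1 ->]] := cls_surj a1; have [t2 [D2 ->]] := cls_surj a2; have [u [Du ->]] := cls_surj x.
rewrite Gadd_cls // /sem; case: excluded_middle_informative => // D12 [<-].
rewrite !Gmul_cls // Gadd_cls; try apply: Def_mul => //.
have S : Seq (Tadd (Tmul t1 u) (Tmul t2 u)) (Tmul (Tadd t1 t2) u).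
  move=> A X Y r /=; have [v E] := DefS D12 r; move: E => /=; evs => E.
  by rewrite E; apply: pr_mulDl.
by rewrite (sem_Seq S) sem_Def //; apply: Def_mul.
Qed.

Definition G : PRing := @PRingPack Gc Gzero Gone Gadd Gmul
  G_add0a G_adda0 G_addC G_addA G_mulC G_mulA G_mul1a G_mul0a G_mulDl.


Definition hfun (A : PRing) (X Y : 'I_n -> 'I_n -> A) (x : Gc) : A :=
  odflt (pr_zero A) (ev X Y (rep x)).

Lemma hfun_cls A X Y (r : @rel A X Y) t : Def t -> ev X Y t = Some (hfun X Y (cls t)).
Proof.
move=> Dt; have [D _] := repP (cls t); rewrite /hfun (rep_cls Dt r).
by have [a ->] := DefS Dt r.
Qed.

Section MkHom.
Variables (A : PRing) (X Y : 'I_n -> 'I_n -> A) (r : rel X Y).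
Lemma mk0 : hfun X Y (pr_zero G) = pr_zero A.
Proof. by have := hfun_cls r Def0 => -[]. Qed.
Lemma mk1 : hfun X Y (pr_one G) = pr_one A.
Proof. by have := hfun_cls r Def1 => -[]. Qed.
Lemma mkM (a b : G) : hfun X Y (pr_mul a b) = pr_mul (hfun X Y a) (hfun X Y b).
Proof.
have [t [Dt ->]] := cls_surj a; have [s [Ds ->]] := cls_surj b.
rewrite /= Gmul_cls //.
have := hfun_cls r (Def_mul Dt Ds); rewrite /= (hfun_cls r Dt) (hfun_cls r Ds).
by case=> ->.
Qed.
Lemma mkD (a1 a2 s : G) : pr_add a1 a2 = Some s -> pr_add (hfun X Y a1) (hfun X Y a2) = Some (hfun X Y s).
Proof.
have [t1 [D1 ->]] := cls_surj a1; have [t2 [D2 ->]] := cls_surj a2.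
rewrite /= Gadd_cls // /sem; case: excluded_middle_informative => // D12 [<-].
by have := hfun_cls r D12; rewrite /= (hfun_cls r D1) (hfun_cls r D2).
Qed.
Definition mkhom : phom G A := PHom mk0 mk1 mkM mkD.
End MkHom.

Definition gX i j : G := cls (TX i j).
Definition gY i j : G := cls (TY i j).
Definition hX (A : PRing) (h : phom G A) i j := h (gX i j).
Definition hY (A : PRing) (h : phom G A) i j := h (gY i j).

Lemma DefX i j : Def (TX i j). Proof. by []. Qed.
Lemma DefY i j : Def (TY i j). Proof. by []. Qed.
Arguments DefX : clear implicits.
Arguments DefY : clear implicits.

Lemma mkhom_X A X Y (r : @rel A X Y) i j : hX (mkhom r) i j = X i j.
Proof. by have := hfun_cls r (DefX i j) => -[]. Qed.
Lemma mkhom_Y A X Y (r : @rel A X Y) i j : hY (mkhom r) i j = Y i j.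
Proof. by have := hfun_cls r (DefY i j) => -[]. Qed.

Lemma sem_big (I : Type) (l : seq I) (f : I -> term) :
  (forall j, Def (f j)) ->
  \big[@oadd G/Some (pr_zero G)]_(j <- l) Some (cls (f j)) = sem (\big[Tadd/T0]_(j <- l) f j).
Proof.
move=> Df; elim: l => [|a l IH]; first by rewrite !big_nil sem_Def.
rewrite !big_cons IH /sem; case: excluded_middle_informative => D /=.
  by rewrite -/(Gadd _ _) Gadd_cls.
case: excluded_middle_informative => // D'; case: D; exact: Def_addr D'.
Qed.

Lemma ev_big A X Y (I : Type) (l : seq I) (f : I -> term) :
  @ev A X Y (\big[Tadd/T0]_(j <- l) f j) = \big[@oadd A/Some (pr_zero A)]_(j <- l) ev X Y (f j).
Proof. by elim: l => [|a l IH]; rewrite ?big_nil ?big_cons //= IH. Qed.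

Definition dterm (i k : 'I_n) := if i == k then T1 else T0.

Lemma relG : @rel G gX gY.
Proof.
have key : forall (P Q : 'I_n -> 'I_n -> term), (forall i j, Def (P i j)) -> (forall i j, Def (Q i j)) ->
   (forall A X Y, @rel A X Y -> forall i k, mprod (fun i j => odflt (pr_zero A) (ev X Y (P i j)))
        (fun i j => odflt (pr_zero A) (ev X Y (Q i j))) i k = Some (delta A i k)) ->
   forall i k : 'I_n, @mprod G (fun i j => cls (P i j)) (fun i j => cls (Q i j)) i k = Some (delta G i k).
  move=> P Q DP DQ H i k; rewrite /mprod /osum.
  under eq_bigr do rewrite /= Gmul_cls //.
  rewrite sem_big; last by move=> j; apply: Def_mul.
  have -> : delta G i k = cls (dterm i k) by rewrite /delta /dterm; case: (i == k).
  rewrite -sem_Def; last by rewrite /dterm; case: (i == k).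
  apply: sem_Seq => A X Y r; rewrite ev_big.
  have -> : ev X Y (dterm i k) = Some (delta A i k) by rewrite /dterm /delta; case: (i == k).
  rewrite -(H A X Y r i k) /mprod /osum; apply: eq_bigr => j _ /=.
  by have [a ->] := DefS (DP i j) r; have [b ->] := DefS (DQ j k) r.
have keyS : forall (P : 'I_n -> 'I_n -> term), (forall i j, Def (P i j)) ->
   (forall A X Y, @rel A X Y -> summ (fun i j => odflt (pr_zero A) (ev X Y (P i j)))) ->
   @summ G (fun i j => cls (P i j)).
  move=> P DP H; split.
    move=> i; rewrite /osum sem_big // /sem; case: excluded_middle_informative => // D; case: D.
    move=> A X Y r; rewrite ev_big; have [+ _] := H A X Y r; move=> /(_ i); rewrite /osum.
    suff -> : \big[@oadd A/Some (pr_zero A)]_(j <- index_enum 'I_n) ev X Y (P i j) =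
       \big[@oadd A/Some (pr_zero A)]_(j < n) Some (odflt (pr_zero A) (ev X Y (P i j))) by [].
    by apply: eq_bigr => j _; have [a ->] := DefS (DP i j) r.
  move=> j; rewrite /osum sem_big // /sem; case: excluded_middle_informative => // D; case: D.
  move=> A X Y r; rewrite ev_big; have [_ +] := H A X Y r; move=> /(_ j); rewrite /osum.
  suff -> : \big[@oadd A/Some (pr_zero A)]_(i <- index_enum 'I_n) ev X Y (P i j) =
     \big[@oadd A/Some (pr_zero A)]_(i < n) Some (odflt (pr_zero A) (ev X Y (P i j))) by [].
  by apply: eq_bigr => i _; have [a ->] := DefS (DP i j) r.
split.
- by apply: (key TX TY DefX DefY) => A X Y [].
- by apply: (key TY TX DefY DefX) => A X Y [].
- by apply: (keyS TX DefX) => A X Y [].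
- by apply: (keyS TY DefY) => A X Y [].
Qed.

Lemma rel_of (A : PRing) (h : phom G A) : rel (hX h) (hY h).
Proof. exact: (rel_hom h relG). Qed.

Lemma phom_eq (A B : PRing) (f g : phom A B) : (forall x, f x = g x) -> f = g.
Proof.
move=> E; have E' : phom_fun f = phom_fun g by apply: functional_extensionality.
case: f g E' {E} => f f0 f1 fM fD [g g0 g1 gM gD] /= E'; subst g.
by rewrite (proof_irrelevance _ f0 g0) (proof_irrelevance _ f1 g1)
  (proof_irrelevance _ fM gM) (proof_irrelevance _ fD gD).
Qed.

Lemma hom_ev (A : PRing) (h : phom G A) t : Def t -> ev (hX h) (hY h) t = Some (h (cls t)).
Proof.
elim: t => [||i j|i j|t IHt s IHs|t IHt s IHs] D /=.
- by rewrite -[cls T0]/(pr_zero G) phom0.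
- by rewrite -[cls T1]/(pr_one G) phom1.
- by [].
- by [].
- have Dt := Def_addl D; have Ds := Def_addr D.
  rewrite (IHt Dt) (IHs Ds) /=; apply: phomD => /=.
  by rewrite Gadd_cls // sem_Def.
- have Dt := Def_mull D; have Ds := Def_mulr D.
  rewrite (IHt Dt) (IHs Ds) -phomM /=.
  by rewrite Gmul_cls.
Qed.

Lemma hom_ext (A : PRing) (h1 h2 : phom G A) :
  (forall i j, hX h1 i j = hX h2 i j) -> (forall i j, hY h1 i j = hY h2 i j) -> h1 = h2.
Proof.
move=> EX EY; apply: phom_eq => x; have [t [Dt ->]] := cls_surj x.
have := hom_ev h1 Dt; have := hom_ev h2 Dt.
have -> : hX h1 = hX h2 by do 2 apply: functional_extensionality => ?; apply: EX.
have -> : hY h1 = hY h2 by do 2 apply: functional_extensionality => ?; apply: EY.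
by move=> -> [].
Qed.


Section PG.
Variable A : PRing.

Definition prodrel (h h' h'' : phom G A) :=
  (forall i k, mprod (hX h) (hX h') i k = Some (hX h'' i k)) /\
  (forall i k, mprod (hY h') (hY h) i k = Some (hY h'' i k)).

Definition pmul (h h' : phom G A) : option (phom G A) :=
  match excluded_middle_informative (exists h'', prodrel h h' h'') with
  | left P => Some (proj1_sig (constructive_indefinite_description _ P))
  | right _ => None
  end.

Lemma prodrel_uniq h h' a b : prodrel h h' a -> prodrel h h' b -> a = b.
Proof.
move=> [Ha1 Ha2] [Hb1 Hb2]; apply: hom_ext => i j.
  by have := Ha1 i j; rewrite Hb1 => -[].
by have := Ha2 i j; rewrite Hb2 => -[].
Qed.

Lemma pmulP h h' h'' : prodrel h h' h'' -> pmul h h' = Some h''.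
Proof.
move=> H; rewrite /pmul; case: excluded_middle_informative => [P|[]]; last by exists h''.
congr Some; apply: prodrel_uniq (H).
exact: (proj2_sig (constructive_indefinite_description _ P)).
Qed.

Lemma pmulE h h' h'' : pmul h h' = Some h'' -> prodrel h h' h''.
Proof.
rewrite /pmul; case: excluded_middle_informative => // P [<-].
exact: (proj2_sig (constructive_indefinite_description _ P)).
Qed.

Lemma rel_delta : rel (delta A) (delta A).
Proof.
have M : forall i k, mprod (delta A) (delta A) i k = Some (delta A i k).
  move=> i k; rewrite /mprod (osum_single (j0 := i)) /delta ?eqxx ?pr_mul1a //.
  by move=> j /negbTE; rewrite eq_sym => ->; rewrite pr_mul0a.
have S : summ (delta A).
  split; [move=> i | move=> j].
    rewrite (osum_single (j0 := i)) // => j; rewrite /delta eq_sym => /negbTE -> //.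
  rewrite (osum_single (j0 := j)) // => i; rewrite /delta => /negbTE -> //.
by split.
Qed.

Definition pone : phom G A := mkhom rel_delta.

Lemma mul1_l (X : 'I_n -> 'I_n -> A) i k : mprod (delta A) X i k = Some (X i k).
Proof.
rewrite /mprod (osum_single (j0 := i)) /delta ?eqxx ?pr_mul1a //.
by move=> j /negbTE; rewrite eq_sym => ->; rewrite pr_mul0a.
Qed.
Lemma mul1_r (X : 'I_n -> 'I_n -> A) i k : mprod X (delta A) i k = Some (X i k).
Proof.
rewrite /mprod (osum_single (j0 := k)) /= /delta ?eqxx ?pr_mul1a; first by rewrite pr_mulC pr_mul1a.
by move=> j /negbTE => ->; rewrite pr_mulC pr_mul0a.
Qed.

Lemma pmul1a h : pmul pone h = Some h.
Proof.
apply: pmulP; split => i k.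
  by rewrite (_ : hX pone = delta A) ?mul1_l //; do 2 apply: functional_extensionality => ?; apply: mkhom_X.
by rewrite (_ : hY pone = delta A) ?mul1_r //; do 2 apply: functional_extensionality => ?; apply: mkhom_Y.
Qed.
Lemma pmula1 h : pmul h pone = Some h.
Proof.
apply: pmulP; split => i k.
  by rewrite (_ : hX pone = delta A) ?mul1_r //; do 2 apply: functional_extensionality => ?; apply: mkhom_X.
by rewrite (_ : hY pone = delta A) ?mul1_l //; do 2 apply: functional_extensionality => ?; apply: mkhom_Y.
Qed.

Lemma pinv h : exists b, pmul h b = Some pone /\ pmul b h = Some pone.
Proof.
have r := rel_of h; exists (mkhom (rel_sym r)).
have eX : hX (mkhom (rel_sym r)) = hY h by do 2 apply: functional_extensionality => ?; apply: mkhom_X.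
have eY : hY (mkhom (rel_sym r)) = hX h by do 2 apply: functional_extensionality => ?; apply: mkhom_Y.
have e1 : forall i k, hX pone i k = delta A i k by move=> i k; apply: mkhom_X.
have e2 : forall i k, hY pone i k = delta A i k by move=> i k; apply: mkhom_Y.
have [H1 H2 _ _] := r.
split; apply: pmulP; split => i k; rewrite ?eX ?eY ?e1 ?e2 //.
Qed.

Definition GLA : PGroup := @PGroupPack (phom G A) pone pmul pmul1a pmula1 pinv.

Lemma GLA_group : good A -> is_group GLA.
Proof.
move=> gA.
have tot : forall h h' : phom G A, exists z, pmul h h' = Some z.
  move=> h h'.
  have [HX HY [SX1 SX2] [SY1 SY2]] := rel_of h.
  have [HX' HY' [SX1' SX2'] [SY1' SY2']] := rel_of h'.
  pose Z i k := odflt (pr_zero A) (mprod (hX h) (hX h') i k).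
  pose W i k := odflt (pr_zero A) (mprod (hY h') (hY h) i k).
  have EZ : forall i k, mprod (hX h) (hX h') i k = Some (Z i k).
    by move=> i k; rewrite /Z; case: (mprod _ _ _ _) (mprod_def gA (Q:=hX h') (k:=k) (SX1 i)).
  have EW : forall i k, mprod (hY h') (hY h) i k = Some (W i k).
    by move=> i k; rewrite /W; case: (mprod _ _ _ _) (mprod_def gA (Q:=hY h) (k:=k) (SY1' i)).
  have r : rel Z W.
    split.
    - exact: (prod_inv HX' HX EZ EW).
    - exact: (prod_inv HY HY' EW EZ).
    - by split; [apply: (prod_rows gA EZ) | apply: (prod_cols gA EZ)].
    - by split; [apply: (prod_rows gA EW) | apply: (prod_cols gA EW)].
  exists (mkhom r); apply: pmulP; split => i k.
    by rewrite mkhom_X.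
  by rewrite mkhom_Y.
split => // a b c.
have [ab Eab] := tot a b; have [bc Ebc] := tot b c.
rewrite /= Eab Ebc /=.
have [abc Eabc] := tot ab c; have [abc' Eabc'] := tot a bc.
rewrite Eabc Eabc'; congr Some.
have [Pab1 Pab2] := pmulE Eab; have [Pbc1 Pbc2] := pmulE Ebc.
have [P1 P2] := pmulE Eabc; have [P1' P2'] := pmulE Eabc'.
apply: hom_ext => i k.
  by have := prod_assoc Pab1 Pbc1 (P1' i k); rewrite P1 => -[].
by have := prod_assoc Pbc2 Pab2 (P2 i k); rewrite P2' => -[].
Qed.
End PG.


Section Fun.
Variables (A B : PRing) (f : phom A B).
Definition Fm (h : GLA A) : GLA B := phom_comp f h.
Lemma Fm1 : Fm (pg_one (GLA A)) = pg_one (GLA B).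
Proof.
apply: hom_ext => i j.
  by change (f (hX (pone A) i j) = hX (pone B) i j); rewrite /pone !mkhom_X delta_hom.
by change (f (hY (pone A) i j) = hY (pone B) i j); rewrite /pone !mkhom_Y delta_hom.
Qed.
Lemma FmM (a b c : GLA A) : pg_mul a b = Some c -> pg_mul (Fm a) (Fm b) = Some (Fm c).
Proof.
move=> /pmulE [P1 P2]; apply: pmulP; split => i k.
  exact: (mprod_hom f (P1 i k)).
exact: (mprod_hom f (P2 i k)).
Qed.
Definition Fmor : pgmor (GLA A) (GLA B) := PGMor Fm1 FmM.
End Fun.

Lemma F_id' (A : PRing) (x : GLA A) : Fmor (phom_id A) x = x.
Proof. by apply: phom_eq. Qed.
Lemma F_comp' (A B C : PRing) (g : phom B C) (f : phom A B) (x : GLA A) :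
  Fmor (phom_comp g f) x = Fmor g (Fmor f x).
Proof. by apply: phom_eq. Qed.

Definition GLF : PFunctor := @PFunctorPack GLA Fmor F_id' F_comp'.

Lemma GLF_rep : representable GLF.
Proof.
exists G, (fun A (x : GLF A) => (x : phom G A)); split => //.
by move=> A; exists id.
Qed.

End GLn.

Section CR.
Variables (n : nat) (R : comPzRingType).
Local Notation A := (comring_pring R).
Local Open Scope ring_scope.

Lemma osum_cr (f : 'I_n -> R) : @osum n A f = Some (\sum_j f j).
Proof.
rewrite /osum; apply: (big_ind2 (fun (o : option A) (x : R) => o = Some x)) => //.
by move=> _ x2 _ y2 -> ->.
Qed.

Definition mx (X : 'I_n -> 'I_n -> A) : 'M[R]_n := \matrix_(i, j) (X i j : R).

Lemma mprod_cr (X Y : 'I_n -> 'I_n -> A) i k : mprod X Y i k = Some ((mx X *m mx Y) i k).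
Proof. by rewrite /mprod osum_cr !mxE; congr Some; apply: eq_bigr => j _; rewrite !mxE. Qed.

Lemma delta_cr i k : (delta A i k : R) = (1%:M : 'M[R]_n) i k.
Proof. by rewrite /delta mxE; case: (i == k). Qed.

Lemma rel_cr1 (X Y : 'I_n -> 'I_n -> A) : rel X Y -> mx X *m mx Y = 1%:M /\ mx Y *m mx X = 1%:M.
Proof.
case=> H1 H2 _ _; split; apply/matrixP => i k.
  by have := H1 i k; rewrite mprod_cr => -[->]; rewrite delta_cr.
by have := H2 i k; rewrite mprod_cr => -[->]; rewrite delta_cr.
Qed.

Lemma rel_cr2 (X Y : 'I_n -> 'I_n -> A) : mx X *m mx Y = 1%:M -> mx Y *m mx X = 1%:M -> rel X Y.
Proof.
move=> H1 H2; split.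
- by move=> i k; rewrite mprod_cr H1 -delta_cr.
- by move=> i k; rewrite mprod_cr H2 -delta_cr.
- by split=> ?; rewrite osum_cr.
- by split=> ?; rewrite osum_cr.
Qed.

Lemma mxK (M : 'M[R]_n) : mx (fun i j => M i j) = M.
Proof. by apply/matrixP => i j; rewrite mxE. Qed.

Lemma part2 : exists phi : GLF n A -> 'M[R]_n,
         injective phi /\
         (forall x, invertible_mx (phi x)) /\
         (forall M : 'M[R]_n, invertible_mx M -> exists x, phi x = M) /\
         phi (pg_one (GLF n A)) = 1%:M /\
         (forall x y, exists z, pg_mul x y = Some z /\ phi z = (phi x *m phi y)).
Proof.
exists (fun h => mx (hX h)); split; last split; last split; last split.
- move=> h h' E.
  have EX : forall i j, hX h i j = hX h' i j.
    by move=> i j; have := congr1 (fun M : 'M[R]_n => M i j) E; rewrite /= !mxE.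
  have [a1 a2] := rel_cr1 (rel_of h); have [b1 b2] := rel_cr1 (rel_of h').
  have EY : mx (hY h) = mx (hY h').
    by rewrite -[mx (hY h)]mulmx1 -b1 -E mulmxA a2 mul1mx.
  apply: hom_ext => // i j.
  by have := congr1 (fun M : 'M[R]_n => M i j) EY; rewrite /= !mxE.
- move=> h; have [a1 a2] := rel_cr1 (rel_of h); by exists (mx (hY h)).
- move=> M [N [H1 H2]].
  have r : @rel n A (fun i j => M i j) (fun i j => N i j) by apply: rel_cr2; rewrite !mxK.
  exists (mkhom r); rewrite -[RHS]mxK; apply/matrixP => i j; rewrite !mxE.
  by rewrite mkhom_X.
- apply/matrixP => i j; rewrite mxE /=.
  rewrite -delta_cr; exact: (mkhom_X (@rel_delta n A) i j).
- move=> h h'.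
  have [a1 a2] := rel_cr1 (rel_of h); have [b1 b2] := rel_cr1 (rel_of h').
  pose P := mx (hX h) *m mx (hX h'); pose Q := mx (hY h') *m mx (hY h).
  have r : @rel n A (fun i j => P i j) (fun i j => Q i j).
    apply: rel_cr2; rewrite !mxK /P /Q.
      by rewrite mulmxA -(mulmxA (mx (hX h))) b1 mulmx1 a1.
    by rewrite mulmxA -(mulmxA (mx (hY h'))) a2 mulmx1 b2.
  exists (mkhom r); split.
    apply: pmulP; split => i k; rewrite ?mkhom_X ?mkhom_Y mprod_cr //.
  by apply/matrixP => i j; rewrite [LHS]mxE mkhom_X.
Qed.
End CR.

Section F1part.
Variable n : nat.

Lemma osum_true (f : 'I_n -> F1) b j : osum f = Some b -> f j -> b.
Proof.
move=> E fj; move: E; rewrite /osum (bigD1 j) //= fj.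
by case: (\big[_/_]_(i < n | _) _) => [[]|] //= [<-].
Qed.

Lemma osum_false (f : 'I_n -> F1) : (forall j, f j = false) -> osum f = Some false.
Proof. by move=> H; rewrite /osum big1 // => j _; rewrite H. Qed.

Lemma deltaF (i k : 'I_n) : delta F1 i k = (i == k).
Proof. by rewrite /delta; case: (i == k). Qed.

Section Sig.
Variables (X Y : 'I_n -> 'I_n -> F1) (r : rel X Y).

Lemma kXY i j k : X i j -> Y j k -> i = k.
Proof.
move=> a b; case: r => H1 _ _ _; have := osum_true (j := j) (H1 i k).
by rewrite /= a b deltaF => /(_ isT) /eqP.
Qed.
Lemma kYX i j k : Y i j -> X j k -> i = k.
Proof.
move=> a b; case: r => _ H2 _ _; have := osum_true (j := j) (H2 i k).
by rewrite /= a b deltaF => /(_ isT) /eqP.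
Qed.

Definition sig i := odflt i [pick j | X i j && Y j i].
Lemma sigP i : X i (sig i) && Y (sig i) i.
Proof.
rewrite /sig; case: pickP => [j //|H0].
case: r => H1 _ _ _; have := H1 i i; rewrite /mprod osum_false ?deltaF ?eqxx //.
Qed.
Lemma sig_inj : injective sig.
Proof.
move=> i k E; have /andP [a _] := sigP i; have /andP [_ b] := sigP k.
by apply: (kXY a); rewrite E.
Qed.
Definition sperm : 'S_n := perm sig_inj.

Lemma charX i j : X i j = (j == sperm i).
Proof.
rewrite permE; apply/idP/eqP => [a|->]; last by case/andP: (sigP i).
pose k := (sperm^-1)%g j.
have /andP [_ b] := sigP k.
have e : sig k = j by have := permKV sperm j; rewrite permE.
rewrite e in b; have := kXY a b => ->; by [].
Qed.
Lemma charY i j : Y j i = (j == sperm i).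
Proof.
rewrite permE; apply/idP/eqP => [b|->]; last by case/andP: (sigP i).
pose k := (sperm^-1)%g j.
have /andP [a _] := sigP k.
have e : sig k = j by have := permKV sperm j; rewrite permE.
rewrite e in a; have := kXY a b => <-; by [].
Qed.
End Sig.

Definition pX (s : 'S_n) : 'I_n -> 'I_n -> F1 := fun i j => j == s i.
Definition pY (s : 'S_n) : 'I_n -> 'I_n -> F1 := fun i j => i == s j.

Lemma single_ne (f : 'I_n -> F1) j0 : (forall j, j != j0 -> f j = false) -> osum f <> None.
Proof. by move=> H; rewrite (osum_single (j0 := j0)). Qed.

Lemma rel_perm s : rel (pX s) (pY s).
Proof.
split.
- move=> i k; rewrite /mprod deltaF (osum_single (j0 := s i)) /= /pX /pY ?eqxx.
    by rewrite (inj_eq perm_inj).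
  by move=> j /negbTE ->.
- move=> i k; rewrite /mprod deltaF (osum_single (j0 := (s^-1)%g i)) /= /pX /pY ?permKV ?eqxx.
    by rewrite eq_sym.
  move=> j ne; apply/negbTE; apply: contra ne => /andP [/eqP -> _].
  by rewrite permK.
- split => [i|j]; first by apply: (single_ne (j0 := s i)) => j /negbTE.
  apply: (single_ne (j0 := (s^-1)%g j)) => i ne; apply/negbTE; apply: contra ne => /eqP ->.
  by rewrite permK.
- split => [i|j]; last by apply: (single_ne (j0 := s j)) => i /negbTE.
  apply: (single_ne (j0 := (s^-1)%g i)) => j ne; apply/negbTE; apply: contra ne => /eqP ->.
  by rewrite permK.
Qed.

Definition phi3 (h : GLF n F1) : 'S_n := sperm (rel_of h).
Definition psi3 (s : 'S_n) : GLF n F1 := mkhom (rel_perm s).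

Lemma hX3 h : hX h = pX (phi3 h).
Proof. by do 2 apply: functional_extensionality => ?; rewrite /pX -charX. Qed.
Lemma hY3 h : hY h = pY (phi3 h).
Proof. by do 2 apply: functional_extensionality => ?; rewrite /pY -charY. Qed.

Lemma part3 : exists phi : GLF n F1 -> 'S_n,
       bijective phi /\
       phi (pg_one (GLF n F1)) = 1%g /\
       (forall x y, exists z, pg_mul x y = Some z /\ phi z = (phi x * phi y)%g).
Proof.
have psiK : forall s, phi3 (psi3 s) = s.
  move=> s; apply/permP => i; have := mkhom_X (rel_perm s) i (s i).
  by rewrite hX3 /pX eqxx => /eqP E; exact: (esym E).
exists phi3; split; last split.
- exists psi3 => // h; apply: hom_ext => i j.
    by rewrite mkhom_X hX3.
  by rewrite mkhom_Y hY3.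
- apply/permP => i; rewrite perm1.
  have := mkhom_X (@rel_delta n F1) i i; rewrite hX3 /pX deltaF eqxx.
  by move=> /eqP.
- move=> h h'; exists (psi3 (phi3 h * phi3 h')%g); split; last exact: psiK.
  apply: pmulP; split => i k.
    rewrite !hX3 psiK /mprod (osum_single (j0 := phi3 h i)) /= /pX ?eqxx ?permM //.
    by move=> j /negbTE ->.
  rewrite !hY3 psiK /mprod (osum_single (j0 := phi3 h k)) /= /pY ?eqxx ?permM ?andbT //.
  by move=> j /negbTE ->; rewrite andbF.
Qed.
End F1part.

Theorem mainTheorem1 (n : nat) (hn : (0 < n)%N) :
  exists GL : PFunctor,
    representable GL /\
    (* (1) good partial rings give groups *)
    (forall A : PRing, good A -> is_group (GL A)) /\
    (* (2) commutative rings: GL_n(A) is the group of invertible matrices *)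
    (forall R : comPzRingType,
       exists phi : GL (comring_pring R) -> 'M[R]_n,
         injective phi /\
         (forall x, invertible_mx (phi x)) /\
         (forall M : 'M[R]_n, invertible_mx M -> exists x, phi x = M) /\
         phi (pg_one (GL (comring_pring R))) = 1%:M%R /\
         (forall x y, exists z, pg_mul x y = Some z /\ phi z = (phi x *m phi y)%R)) /\
    (* (3) GL_n(F_1) is the symmetric group S_n *)
    (exists phi : GL F1 -> 'S_n,
       bijective phi /\
       phi (pg_one (GL F1)) = 1%g /\
       (forall x y, exists z, pg_mul x y = Some z /\ phi z = (phi x * phi y)%g)).
Proof.
exists (GLF n); split; first exact: GLF_rep.
split; first by move=> A gA; exact: GLA_group.
split; first by move=> R; exact: part2.
exact: part3.
Qed.
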